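(* Let $n\geq 3$, $p,q>0$ with $pq>1$, $\alpha\in(0,n)$, $\sigma_1,\sigma_2\in[0,\alpha)$, with $q\geq p$ and $\sigma_1\geq\sigma_2$. Let $u,v$ be positive solutions of $$u(x)=\int_{\mathbb{R}^n}\frac{v(y)^q}{|x-y|^{n-\alpha}|y|^{\sigma_1}}\,dy,\qquad v(x)=\int_{\mathbb{R}^n}\frac{u(y)^p}{|x-y|^{n-\alpha}|y|^{\sigma_2}}\,dy,\qquad x\in\mathbb{R}^n,$$ satisfying $q_0+p_0\leq n-\alpha$. If $u,v$ are bounded and decay with the fast rates as $|x|\to\infty$, then $u,v$ are integrable solutions.
   Context: Define $$p_0=\frac{\alpha(1+p)-(\sigma_2+\sigma_1p)}{pq-1},\qquad q_0=\frac{\alpha(1+q)-(\sigma_1+\sigma_2q)}{pq-1},\qquad r_0=\frac{n}{q_0},\qquad s_0=\frac{n}{p_0}.$$ A positive solution $u,v$ is integrable if $u\in L^{r_0}(\mathbb{R}^n)$ and $v\in L^{s_0}(\mathbb{R}^n)$. The notation $f(x)\simeq g(x)$ means there exist constants $c,C>0$ with $cg(x)\leq f(x)\leq Cg(x)$ as $|x|\to\infty$. With $q\geq p$ and $\sigma_1\geq\sigma_2$, $u,v$ decay with the fast rates if $u(x)\simeq|x|^{-(n-\alpha)}$ and $v(x)\simeq|x|^{-(n-\alpha)}$ if $p(n-\alpha)+\sigma_2>n$; $v(x)\simeq|x|^{-(n-\alpha)}\ln|x|$ if $p(n-\alpha)+\sigma_2=n$; $v(x)\simeq|x|^{-(p(n-\alpha)-(\alpha-\sigma_2))}$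 if $p(n-\alpha)+\sigma_2<n$. *)

(* Defs.v *)
From HB Require Import structures.
From mathcomp Require Import all_boot all_order all_algebra.
From mathcomp Require Import all_classical all_reals all_analysis.
Set Implicit Arguments. Unset Strict Implicit. Unset Printing Implicit Defensive.
Import Order.TTheory GRing.Theory Num.Theory.
Local Open Scope classical_set_scope.
Local Open Scope ring_scope.

Section defs.
Variable R : realType.

(* Points of R^n are n-tuples of reals (measurable structure: the product
   sigma-algebra generated by the coordinates = Borel sets of R^n). *)

(* Lebesgue integral over R^n of a nonnegative extended-real function,
   computed as the iterated Lebesgue integral (Tonelli). *)
Fixpoint iint (n : nat) : (n.-tuple R -> \bar R) -> \bar R :=
  match n return (n.-tuple R -> \bar R) -> \bar R with
  | 0 => fun f => f [tuple]
  | n'.+1 => fun f =>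
      (\int[@lebesgue_measure R]_x iint (fun t => f (cons_tuple x t)))%E
  end.

Definition edist (n : nat) (x y : n.-tuple R) : R :=
  Num.sqrt (\sum_(i < n) (tnth x i - tnth y i) ^+ 2).
Definition enorm (n : nat) (x : n.-tuple R) : R :=
  Num.sqrt (\sum_(i < n) (tnth x i) ^+ 2).

(* f in L^r(R^n), for a positive function f *)
Definition in_Lr (n : nat) (r : R) (f : n.-tuple R -> R) : Prop :=
  measurable_fun setT f /\ (iint (fun x => ((f x) `^ r)%:E) < +oo)%E.

Definition HLS_op (n : nat) (alpha sigma e : R) (w : n.-tuple R -> R)
  (x : n.-tuple R) : \bar R :=
  iint (fun y => ((w y) `^ e /
         ((edist x y) `^ (n%:R - alpha) * (enorm y) `^ sigma))%:E).

Definition asymp_eq (n : nat) (f g : n.-tuple R -> R) : Prop :=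
  exists c C R0 : R, 0 < c /\ 0 < C /\
    forall x, R0 <= enorm x -> c * g x <= f x /\ f x <= C * g x.

Definition p0 (alpha p q sigma1 sigma2 : R) : R :=
  (alpha * (1 + p) - (sigma2 + sigma1 * p)) / (p * q - 1).
Definition q0 (alpha p q sigma1 sigma2 : R) : R :=
  (alpha * (1 + q) - (sigma1 + sigma2 * q)) / (p * q - 1).

(* fast decay rates (with q >= p, sigma1 >= sigma2) *)
Definition fast_decay (n : nat) (alpha p sigma2 : R)
  (u v : n.-tuple R -> R) : Prop :=
  asymp_eq u (fun x => (enorm x) `^ (- (n%:R - alpha))) /\
  (p * (n%:R - alpha) + sigma2 > n%:R ->
     asymp_eq v (fun x => (enorm x) `^ (- (n%:R - alpha)))) /\
  (p * (n%:R - alpha) + sigma2 = n%:R ->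
     asymp_eq v (fun x => (enorm x) `^ (- (n%:R - alpha)) * ln (enorm x))) /\
  (p * (n%:R - alpha) + sigma2 < n%:R ->
     asymp_eq v (fun x => (enorm x) `^ (- (p * (n%:R - alpha) - (alpha - sigma2))))).

End defs.

(* Main.v *)
Require Import Defs.
From HB Require Import structures.
From mathcomp Require Import all_boot all_order all_algebra.
From mathcomp Require Import all_classical all_reals all_analysis.
From mathcomp Require Import measurable_realfun.
From mathcomp Require Import ring lra.
Import Order.TTheory GRing.Theory Num.Theory.
Import numFieldNormedType.Exports.
Local Open Scope classical_set_scope.
Local Open Scope ring_scope.

Section iintlemmas.
Context {R : realType}.
Local Open Scope ereal_scope.

Lemma le_int_nm (f g : R -> \bar R) :
  (forall x, 0 <= f x) -> (forall x, f x <= g x) ->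
  \int[@lebesgue_measure R]_x f x <= \int[@lebesgue_measure R]_x g x.
Proof.
move=> f0 fg.
have g0 x : 0 <= g x by exact: le_trans (f0 x) (fg x).
rewrite !ge0_integralTE//.
apply: ge_ereal_sup => _ /= [h hf <-].
apply: ereal_sup_ubound => /=.
by exists h => // x; exact: le_trans (hf x) (fg x).
Qed.

Lemma iint_ge0 n (f : n.-tuple R -> \bar R) : (forall x, 0 <= f x) -> 0 <= iint f.
Proof.
elim: n f => [|n IH] f f0 /=; first exact: f0.
by apply: integral_ge0 => x _; apply: IH.
Qed.

Lemma iint_le n (f g : n.-tuple R -> \bar R) : (forall x, 0 <= f x) ->
  (forall x, f x <= g x) -> iint f <= iint g.
Proof.
elim: n f g => [|n IH] f g f0 fg /=; first exact: fg.
apply: le_int_nm => x; first by apply: iint_ge0.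
by apply: IH.
Qed.

Lemma iint_prod n (w : R -> R) (I : R) : (forall t, (0 <= w t)%R) ->
  measurable_fun setT w ->
  \int[@lebesgue_measure R]_x (w x)%:E = I%:E ->
  forall k : R, (0 <= k)%R ->
  iint (fun t : n.-tuple R => (k * \prod_(i < n) w (tnth t i))%:E) = (k * I ^+ n)%:E.
Proof.
move=> w0 mw wI.
elim: n => [|n IH] k k0 /=.
  by rewrite big_ord0 expr0.
transitivity (\int[@lebesgue_measure R]_x ((k * I ^+ n) * w x)%:E).
  apply: eq_integral => x _.
  rewrite (_ : (k * I ^+ n) * w x = (k * w x) * I ^+ n)%R; last by rewrite mulrAC.
  rewrite -IH; last by rewrite mulr_ge0.
  congr iint; apply: funext => t.
  by rewrite big_ord_recl /= tnth0 mulrA; congr (_ * _)%:E; 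
    apply: eq_bigr => i _; rewrite tnthS.
under eq_integral do rewrite EFinM.
rewrite ge0_integralZl_EFin//.
- by rewrite wI -EFinM exprSr mulrA.
- by move=> x _; rewrite lee_fin.
- exact/measurable_EFinP.
- by rewrite mulr_ge0// exprn_ge0// -lee_fin -wI integral_ge0// => x _; rewrite lee_fin.
Qed.

End iintlemmas.
Section oned.
Context {R : realType}.

Lemma w_cont (g : R) : continuous (fun x : R => (1 + `|x|) `^ (- g)).
Proof.
move=> x.
apply: (@continuous_comp _ _ _ (fun x : R => 1 + `|x|) (fun a : R => a `^ (- g))).
  apply: continuousD; first exact: cst_continuous.
  exact: norm_continuous.
apply/differentiable_continuous/derivable1_diffP.
by apply: derivable_powR; rewrite in_itv/= andbT ltr_wpDr.
Qed.

Lemma F_derive (g x : R) : 1 < g -> -1 < x ->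
  is_derive x 1 (fun x => (1 - g)^-1 * (1 + x) `^ (1 - g)) ((1 + x) `^ (- g)).
Proof.
move=> g1 x1.
have a0 : 1 - g != 0 by rewrite subr_eq0 lt_eqF.
have x0 : 0 < 1 + x by rewrite -ltrBlDl sub0r.
have h1 : is_derive x 1 (fun x : R => 1 + x) 1.
  have -> : (fun x : R => 1 + x) = (cst 1 : R -> R) + id by apply: funext.
  have := @is_deriveD R R R (cst 1) id x 1 0 1 (is_derive_cst (1:R) x 1) (is_derive_id x 1).
  by rewrite add0r.
have h2 : is_derive x 1 ((fun a : R => a `^ (1 - g)) \o (fun x : R => 1 + x))
   ((1 - g) * (1 + x) `^ (1 - g - 1) * 1).
  apply: is_derive1_comp; first exact: is_derive1_powR.
  all: try exact: h1.
have h3 := @is_deriveZ R R R _ ((1 - g)^-1) x 1 _ h2.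
rewrite (_ : (1 + x) `^ (- g) = (1 - g)^-1 *: ((1 - g) * (1 + x) `^ (1 - g - 1) * 1)).
  exact: h3.
by rewrite mulr1 /GRing.scale /= mulrA mulVf// mul1r addrAC subrr add0r.
Qed.

End oned.

Section oned2.
Context {R : realType}.

Lemma powR_cvgy0 (b : R) : 0 < b -> (1 + x) `^ (- b) @[x --> +oo] --> 0.
Proof.
move=> b0; apply/cvgrPdist_lt => e e0.
have M0 : 0 < e `^ (- b^-1) by rewrite powR_gt0.
near=> x.
have hx : e `^ (- b^-1) < 1 + x.
  by rewrite -ltrBlDl; near: x; apply: nbhs_pinfty_gt; rewrite num_real.
have y0 : 0 < 1 + x by apply: lt_trans hx.
rewrite sub0r normrN ger0_norm ?powR_ge0//.
rewrite powRN.
have -> : e = ((e `^ (- b^-1)) `^ b)^-1.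
  by rewrite -powRrM mulNr mulVf ?gt_eqF// powRN powRr1 ?invrK// ltW.
rewrite ltf_pV2 ?posrE ?powR_gt0//.
by apply: gt0_ltr_powR => //; rewrite nnegrE ltW.
Unshelve. all: by end_near. Qed.

Lemma w_int (g : R) : 1 < g ->
  exists I : R, (\int[@lebesgue_measure R]_x ((1 + `|x|) `^ (- g))%:E = I%:E)%E.
Proof.
move=> g1.
rewrite (ge0_symfun_integralT (f := fun x : R => (1 + `|x|) `^ (- g))); last 3 first.
- by move=> x; apply: powR_ge0.
- exact: w_cont.
- by move=> x; rewrite /= normrN.
rewrite -set_itvcy.
rewrite (@ge0_continuous_FTC2y _ (fun x : R => (1 + `|x|) `^ (- g))
   (fun x => (1 - g)^-1 * (1 + x) `^ (1 - g)) 0 0).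
- by eexists; rewrite -EFinB -EFinM.
- by move=> x _; apply: powR_ge0.
- by apply: continuous_subspaceT; exact: w_cont.
- rewrite -(mulr0 ((1 - g)^-1)); apply: cvgMl_tmp.
  have -> : 1 - g = - (g - 1) by rewrite opprB.
  by apply: powR_cvgy0; rewrite subr_gt0.
- move=> x x0; have [] := @F_derive R g x g1; last by [].
  by apply: lt_trans x0; rewrite ltrN10.
- apply: cvg_at_right_filter.
  have [dF _] := @F_derive R g 0 g1 (ltrN10 _).
  move/derivable1_diffP/differentiable_continuous: dF.
  done.
- move=> x; rewrite in_itv/= andbT => x0.
  rewrite derive1E.
  have [_ ->] := @F_derive R g x g1 (lt_trans (ltrN10 _) x0).
  by rewrite gtr0_norm.
Qed.

End oned2.
Section alg.
Context {R : realType}.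

Lemma powRN_le (a b e : R) : 0 < a -> a <= b -> 0 <= e -> b `^ (- e) <= a `^ (- e).
Proof.
move=> a0 ab e0; rewrite !powRN lef_pV2 ?posrE ?powR_gt0 ?(lt_le_trans a0 ab)//.
by apply: ge0_ler_powR => //; rewrite nnegrE ltW// (lt_le_trans a0 ab).
Qed.

Lemma prod_powR n (a : 'I_n -> R) (e : R) : (forall i, 0 <= a i) ->
  \prod_(i < n) (a i) `^ e = (\prod_(i < n) a i) `^ e.
Proof.
move=> a0.
pose K (y1 y2 : R) := y1 = y2 `^ e /\ 0 <= y2.
suff [] : K (\prod_(i < n) (a i) `^ e) (\prod_(i < n) a i) by [].
apply: (big_rec2 K).
  by split; [rewrite powR1|].
move=> i y1 y2 _ [-> y20]; split; last by rewrite mulr_ge0.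
by rewrite powRM.
Qed.

Lemma coord_le_enorm n (x : n.-tuple R) (i : 'I_n) : `|tnth x i| <= enorm x.
Proof.
rewrite /enorm -sqrtr_sqr ler_wsqrtr//.
rewrite (bigD1 i)//= lerDl sumr_ge0// => j _.
by rewrite sqr_ge0.
Qed.

Lemma prod_le n (x : n.-tuple R) :
  \prod_(i < n) (1 + `|tnth x i|) <= (1 + enorm x) ^+ n.
Proof.
have -> : (1 + enorm x) ^+ n = \prod_(i < n) (1 + enorm x) by rewrite prodr_const card_ord.
apply: ler_prod => i _; rewrite addr_ge0//= lerD2l.
exact: coord_le_enorm.
Qed.

Lemma prod_w_ge n (x : n.-tuple R) (g : R) : 0 <= g ->
  (1 + enorm x) `^ (- (n%:R * g)) <= \prod_(i < n) (1 + `|tnth x i|) `^ (- g).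
Proof.
move=> g0.
rewrite prod_powR; last by move=> i; rewrite addr_ge0.
have e0 : 0 <= enorm x by rewrite /enorm sqrtr_ge0.
rewrite -mulrN powRrM powR_mulrn ?addr_ge0//.
apply: powRN_le => //.
  by rewrite prodr_gt0// => i _; rewrite ltr_wpDr.
exact: prod_le.
Qed.

End alg.
Section key.
Context {R : realType}.

Lemma pointwise_bound n (f : n.-tuple R -> R) (M C R0 d r : R) :
  (forall x, 0 < f x) -> (forall x, f x <= M) -> 0 < r -> 0 < d ->
  (forall x, R0 <= enorm x -> f x <= C * enorm x `^ (- d)) ->
  exists K : R, 0 <= K /\ forall x,
    f x `^ r <= K * (1 + enorm x) `^ (- (d * r)).
Proof.
move=> f0 fM r0 d0 fC.
pose R1 := Num.max R0 1.
have R11 : 1 <= R1 by rewrite le_max lexx orbT.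
have dr0 : 0 <= d * r by rewrite mulr_ge0// ltW.
pose K1 := M `^ r * ((1 + R1) `^ (- (d * r)))^-1.
pose K2 := Num.max C 0 `^ r * (2^-1) `^ (- (d * r)).
have K10 : 0 <= K1 by rewrite mulr_ge0 ?powR_ge0// invr_ge0 powR_ge0.
have K20 : 0 <= K2 by rewrite mulr_ge0 ?powR_ge0.
exists (K1 + K2); split; first by rewrite addr_ge0.
move=> x.
have e0 : 0 <= enorm x by rewrite /enorm sqrtr_ge0.
have A0 : 0 < 1 + enorm x by rewrite ltr_wpDr.
have P0 : 0 <= (1 + enorm x) `^ (- (d * r)) by rewrite powR_ge0.
have [xl|xs] := leP R1 (enorm x).
- apply: le_trans (_ : K2 * (1 + enorm x) `^ (- (d * r)) <= _); last first.
    by rewrite ler_wpM2r// lerDr.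
  have x1 : 1 <= enorm x by apply: le_trans xl.
  have hx : f x <= Num.max C 0 * enorm x `^ (- d).
    apply: le_trans (fC x _) _; first by apply: le_trans xl; rewrite le_max lexx.
    by rewrite ler_wpM2r ?powR_ge0// le_max lexx.
  apply: le_trans (_ : (Num.max C 0 * enorm x `^ (- d)) `^ r <= _).
    apply: ge0_ler_powR; [exact: ltW | by rewrite nnegrE ltW |
      by rewrite nnegrE mulr_ge0 ?powR_ge0// le_max lexx orbT | exact: hx].
  rewrite powRM ?powR_ge0 ?le_max ?lexx ?orbT// -powRrM mulNr /K2 -mulrA ler_wpM2l ?powR_ge0//.
  rewrite -powRM ?invr_ge0// ?addr_ge0//.
  apply: powRN_le => //.
    by rewrite mulr_gt0 ?invr_gt0// (lt_le_trans ltr01).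
  by rewrite mulrC ler_pdivrMr// mulr_natr mulr2n lerD2r.
- apply: le_trans (_ : K1 * (1 + enorm x) `^ (- (d * r)) <= _); last first.
    by rewrite ler_wpM2r// lerDl.
  apply: le_trans (_ : M `^ r <= _).
    apply: ge0_ler_powR; [exact: ltW | by rewrite nnegrE ltW |
      by rewrite nnegrE ltW// (lt_le_trans (f0 x) (fM x)) | exact: fM].
  rewrite /K1 -mulrA -[X in X <= _]mulr1 ler_wpM2l ?powR_ge0//.
  have R10 : 0 < 1 + R1 by rewrite (lt_le_trans ltr01)// lerDl (le_trans ler01 R11).
  rewrite mulrC ler_pdivlMr ?powR_gt0// mul1r.
  by apply: powRN_le => //; rewrite lerD2l ltW.
Qed.


Lemma key_int n (f : n.-tuple R -> R) (M C R0 d r : R) :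
  (0 < n)%N -> (forall x, 0 < f x) -> (forall x, f x <= M) -> 0 < r -> 0 < d ->
  n%:R < d * r ->
  (forall x, R0 <= enorm x -> f x <= C * enorm x `^ (- d)) ->
  (iint (fun x => ((f x) `^ r)%:E) < +oo)%E.
Proof.
move=> n0 f0 fM r0 d0 ndr fC.
have [K [K0 hK]] := @pointwise_bound n f M C R0 d r f0 fM r0 d0 fC.
pose g := d * r / n%:R.
have nR0 : 0 < n%:R :> R by rewrite ltr0n.
have g1 : 1 < g by rewrite /g ltr_pdivlMr// mul1r.
have g0 : 0 <= g by rewrite ltW// (lt_trans ltr01).
have [I hI] := w_int g g1.
apply: (@le_lt_trans _ _ (iint (fun t : n.-tuple R =>
   (K * \prod_(i < n) (1 + `|tnth t i|) `^ (- g))%:E))).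
  apply: iint_le => x; first by rewrite lee_fin powR_ge0.
  rewrite lee_fin; apply: le_trans (hK x) _; rewrite ler_wpM2l//.
  have -> : d * r = n%:R * g by rewrite /g [n%:R * _]mulrC divfK// gt_eqF.
  exact: prod_w_ge.
rewrite (@iint_prod R n (fun t => (1 + `|t|) `^ (- g)) I) //.
all: try exact: ltry.
all: try (by move=> t; apply: powR_ge0).
by apply: continuous_measurable_fun; exact: w_cont.
Qed.

End key.
Section fin.
Context {R : realType}.

Lemma log_bound (y d e : R) : 1 <= y -> 0 < e ->
  y `^ (- d) * ln y <= e^-1 * y `^ (- (d - e)).
Proof.
move=> y1 e0.
have y0 : 0 < y by apply: lt_le_trans y1.
have h : e * ln y <= y `^ e.
  rewrite -ln_powR.
  have z0 : 0 < y `^ e by rewrite powR_gt0.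
  have H1 : -1 < y `^ e - 1 by lra.
  have := @le_ln1Dx R _ H1; rewrite [1 + _]addrC subrK => H.
  apply: le_trans H _; lra.
rewrite (_ : - (d - e) = - d + e); last by ring.
rewrite powRD; last by rewrite (gt_eqF y0) implybT.
rewrite -(ler_pM2l e0) [X in _ <= X]mulrA mulfV ?gt_eqF// mul1r mulrCA.
by rewrite ler_wpM2l ?powR_ge0.
Qed.

Lemma ratio_gt (m a d : R) : 0 < m -> 0 < a -> a < d -> m < d * (m / a).
Proof.
move=> m0 a0 ad.
by rewrite mulrA ltr_pdivlMr// [d * m]mulrC ltr_pM2l.
Qed.

End fin.
Theorem proposition4p5 (R : realType) (n : nat) (p q alpha sigma1 sigma2 : R)
  (u v : n.-tuple R -> R) :
  (3 <= n)%N ->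
  0 < p -> 0 < q -> 1 < p * q ->
  0 < alpha -> alpha < n%:R ->
  0 <= sigma1 -> sigma1 < alpha -> 0 <= sigma2 -> sigma2 < alpha ->
  p <= q -> sigma2 <= sigma1 ->
  (* u, v are positive (measurable) solutions of the integral system *)
  measurable_fun setT u -> measurable_fun setT v ->
  (forall x, 0 < u x) -> (forall x, 0 < v x) ->
  (forall x, (u x)%:E = HLS_op alpha sigma1 q v x) ->
  (forall x, (v x)%:E = HLS_op alpha sigma2 p u x) ->
  q0 alpha p q sigma1 sigma2 + p0 alpha p q sigma1 sigma2 <= n%:R - alpha ->
  (* u, v bounded *)
  (exists M : R, forall x, u x <= M) -> (exists M : R, forall x, v x <= M) ->
  fast_decay alpha p sigma2 u v ->
  in_Lr (n%:R / q0 alpha p q sigma1 sigma2) u /\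
  in_Lr (n%:R / p0 alpha p q sigma1 sigma2) v.
Proof.
move=> n3 p0' q0' pq1 a0 an s10 s1a s20 s2a _ _ mu mv u0 v0 _ _ hsum
  [Mu hMu] [Mv hMv] [hu [hv1 [hv2 hv3]]].
set Q := q0 alpha p q sigma1 sigma2.
set P := p0 alpha p q sigma1 sigma2.
have D0 : 0 < p * q - 1 by rewrite subr_gt0.
have Q0 : 0 < Q.
  rewrite /Q /q0 divr_gt0//.
  have : 0 < q * (alpha - sigma2) by rewrite mulr_gt0// subr_gt0.
  nra.
have P0 : 0 < P.
  rewrite /P /p0 divr_gt0//.
  have : 0 < p * (alpha - sigma1) by rewrite mulr_gt0// subr_gt0.
  nra.
have PQ : P = p * Q - (alpha - sigma2).
  rewrite /P /Q /p0 /q0; field; by rewrite gt_eqF.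
have hs : Q + P <= n%:R - alpha by exact: hsum.
clearbody Q P.

have QL : Q < n%:R - alpha by lra.
have PL : P < n%:R - alpha by lra.
have n0 : (0 < n)%N by apply: leq_trans n3.
have nR0 : 0 < n%:R :> R by rewrite ltr0n.
have na0 : 0 < n%:R - alpha by rewrite subr_gt0.
split.
  split => //.
  case: hu => c [C [R0 [c0 [C0 hu]]]].
  apply: (@key_int R n u Mu C R0 (n%:R - alpha)) => //.
  - by rewrite divr_gt0.
  - exact: ratio_gt.
  - by move=> x /hu [].
split => //.
have s0 : 0 < n%:R / P by rewrite divr_gt0.
have [hgt|hlt|heq] := ltgtP n%:R (p * (n%:R - alpha) + sigma2).
- case: (hv1 hgt) => c [C [R0 [c0 [C0 hv]]]].
  apply: (@key_int R n v Mv C R0 (n%:R - alpha)) => //.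
  - exact: ratio_gt.
  - by move=> x /hv [].
- case: (hv3 hlt) => c [C [R0 [c0 [C0 hv]]]].
  have dP : P < p * (n%:R - alpha) - (alpha - sigma2).
    rewrite PQ ltrBlDr subrK ltr_pM2l//.
  apply: (@key_int R n v Mv C R0 (p * (n%:R - alpha) - (alpha - sigma2))) => //.
  - exact: lt_trans dP.
  - exact: ratio_gt.
  - by move=> x /hv [].
- case: (hv2 (esym heq)) => c [C [R0 [c0 [C0 hv]]]].
  pose e := (n%:R - alpha - P) / 2.
  have e0 : 0 < e by rewrite /e divr_gt0// subr_gt0.
  apply: (@key_int R n v Mv (C / e) (Num.max R0 1) (n%:R - alpha - e)) => //.
  - rewrite /e; lra.
  - apply: ratio_gt => //; rewrite /e; lra.
  - move=> x hx.
    have x1 : 1 <= enorm x by apply: le_trans hx; rewrite le_max lexx orbT.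
    have hR : R0 <= enorm x by apply: le_trans hx; rewrite le_max lexx.
    have [_ ] := hv x hR.
    move/le_trans; apply.
    rewrite -mulrA ler_wpM2l ?(ltW C0)//.
    exact: log_bound.
Qed.
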